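(* Fix an integer $r\ge1$ and let $I_r(y)=\sup_{\xi\in\mathbb{R}}\left(y\xi-\varphi^r(\xi)\right)$ for $y\in[0,2^{-r}]$. Then: (1) as $\eta\to0^+$, \[ I_r(\eta)=2\eta\log\left(4^r\eta\sqrt{\Psi^r(0)\prod_{k=1}^{r}\Psi^k(0)}\right)-\log\Psi^r(0)-2\eta+O(\eta^2); \] (2) as $\eta\to0^+$, \[ I_r\left(\frac{1}{2^r}-\eta\right)=2^r\eta\log\left(2^{\,r-1+2^{1-r}}\eta\right)+(2-2^{1-r})\log 2-2^r\eta+O(\eta^2). \] In particular $I_r(0)=-\log\Psi^r(0)$ and $I_r(2^{-r})=(2-2^{1-r})\log 2$.
   Context: $\varphi(\xi)=\frac{\xi}{4}+\log\cosh\frac{\xi}{4}$ for $\xi\in\mathbb{R}$, and $\varphi^r$ is its $r$-fold composition. For $X\in[0,\infty)$, $\Psi(X)=\frac{\sqrt{X}+1}{2}$, and $\Psi^k$ denotes the $k$-fold composition of $\Psi$. ($I_r$ is the rate function in the large deviation principle for $S_{r+1,n}/n$, the normalized number of Strahler-order-$(r+1)$ branches in a uniformly random planar full binary tree with $n$ leaves.) *)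

(* Defs.v *)
From Stdlib Require Import Reals Lra Classical ClassicalEpsilon.
Open Scope R_scope.

Definition phi (xi : R) : R := xi / 4 + ln (cosh (xi / 4)).

Definition Psi (X : R) : R := (sqrt X + 1) / 2.

Fixpoint iter_fun (k : nat) (f : R -> R) (x : R) : R :=
  match k with
  | O => x
  | S k' => f (iter_fun k' f x)
  end.

Fixpoint prod_Psi (n : nat) : R :=
  match n with
  | O => 1
  | S n' => prod_Psi n' * iter_fun (S n') Psi 0
  end.

(* Supremum of a set of reals (the least upper bound when the set is
   nonempty and bounded above; default value 0 otherwise). *)
Definition Rsup (S : R -> Prop) : R :=
  match excluded_middle_informative (bound S /\ exists x, S x) with
  | left h => proj1_sig (completeness S (proj1 h) (proj2 h))
  | right _ => 0
  end.

Definition I_rate (r : nat) (y : R) : R :=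
  Rsup (fun z => exists xi : R, z = y * xi - iter_fun r phi xi).

(* Main.v *)
Require Import Defs.
From Stdlib Require Import Reals Lra Psatz Lia Classical ClassicalEpsilon.
Open Scope R_scope.

Lemma ln_le' x y : 0 < x -> x <= y -> ln x <= ln y.
Proof. intros Hx [H|H]. left; apply ln_increasing; auto. subst; lra. Qed.

Lemma ln_le_sub1 x : 0 < x -> ln x <= x - 1.
Proof. intros Hx. pose proof (exp_ineq1_le (ln x)). rewrite exp_ln in H; lra. Qed.

Lemma ln_ge_1inv x : 0 < x -> 1 - / x <= ln x.
Proof. intros Hx. pose proof (ln_le_sub1 (/x) (Rinv_0_lt_compat _ Hx)).
 rewrite ln_Rinv in H; lra. Qed.

Lemma ln1p_ge x : 0 <= x -> x - x * x <= ln (1 + x).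
Proof. intros Hx. pose proof (ln_ge_1inv (1+x) ltac:(lra)).
 assert (1 - / (1+x) = x/(1+x)) by (field; lra).
 assert (x - x*x <= x/(1+x)).
 { apply (Rmult_le_reg_r (1+x)); [lra|]. unfold Rdiv. rewrite Rmult_assoc, Rinv_l by lra. nra. }
 lra. Qed.

Lemma ln1p_ge_half x : 0 <= x <= 1 -> x / 2 <= ln (1 + x).
Proof. intros Hx. pose proof (ln_ge_1inv (1+x) ltac:(lra)).
 assert (1 - / (1+x) = x/(1+x)) by (field; lra).
 assert (x/2 <= x/(1+x)).
 { apply (Rmult_le_reg_r (1+x)); [lra|]. unfold Rdiv. rewrite (Rmult_assoc x (/(1+x))), Rinv_l by lra. nra. }
 lra. Qed.

Lemma ln1p_le x : -1 < x -> ln (1 + x) <= x.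
Proof. intros. pose proof (ln_le_sub1 (1+x)); lra. Qed.

Lemma xlnx_ge x : 0 < x -> -2 * sqrt x <= x * ln x.
Proof. intros Hx. pose proof (sqrt_lt_R0 x Hx) as Hs.
 assert (E: x = sqrt x * sqrt x) by (rewrite sqrt_sqrt; lra).
 assert (ln x = 2 * ln (sqrt x)) by (rewrite E at 1; rewrite ln_mult by lra; ring).
 pose proof (ln_ge_1inv (sqrt x) Hs).
 assert (sqrt x * (1 - / sqrt x) = sqrt x - 1) by (field; lra).
 assert (sqrt x * ln (sqrt x) >= sqrt x - 1).
 { rewrite <- H1. apply Rle_ge, Rmult_le_compat_l; lra. }
 rewrite H. set (s := sqrt x) in *. set (l := ln s) in *.
 assert (x * (2 * l) = 2 * s * (s * l)) by (rewrite E; ring).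
 rewrite H3. nra. Qed.

Lemma max_conc al be u : 0 < al -> 0 < be -> 0 < u ->
  al * ln u - be * u <= al * ln (al / be) - al.
Proof. intros Ha Hb Hu.
 assert (Hx: 0 < u * be / al) by (apply Rdiv_lt_0_compat; nra).
 pose proof (ln_le_sub1 _ Hx).
 assert (ln (u * be / al) = ln u - ln (al/be)).
 { assert (u * be / al = u * / (al / be)) by (field; lra). rewrite H0.
   assert (0 < al / be) by (apply Rdiv_lt_0_compat; auto).
   rewrite ln_mult by (auto; apply Rinv_0_lt_compat; auto). rewrite ln_Rinv by auto. ring. }
 rewrite H0 in H.
 assert (al * (ln u - ln (al/be)) <= al * (u * be / al - 1)) by (apply Rmult_le_compat_l; lra).
 assert (al * (u * be / al - 1) = be * u - al) by (field; lra).
 lra. Qed.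

Lemma Rsup_le (S : R -> Prop) M : (forall z, S z -> z <= M) -> (exists z, S z) -> Rsup S <= M.
Proof. intros HM Hne. unfold Rsup.
 destruct (excluded_middle_informative _) as [h|h].
 - destruct (completeness S _ _) as [x [Hx1 Hx2]]. simpl. apply Hx2. intros z Hz; auto.
 - exfalso. apply h. split; auto. exists M; intros z Hz; auto. Qed.

Lemma Rsup_ge (S : R -> Prop) M z : (forall z, S z -> z <= M) -> S z -> z <= Rsup S.
Proof. intros HM Hz. unfold Rsup.
 destruct (excluded_middle_informative _) as [h|h].
 - destruct (completeness S _ _) as [x [Hx1 Hx2]]. simpl. apply Hx1; auto.
 - exfalso. apply h. split; eauto. exists M; intros w Hw; auto. Qed.

Definition Tf p a al := - ln p + al * ln (al * p / a) - al.

Lemma main_gen (h : R -> R) p a d ka C :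
 0 < p -> 0 < a -> 0 <= d -> 0 < ka ->
 (forall u, 0 < u <= 1 -> p + a*u - d*(u*u) <= h u <= p + a*u + d*(u*u)) ->
 (forall u, 0 < u -> p <= h u) ->
 (forall u v, 0 < u -> u <= v -> h u <= h v) ->
 (forall u, 0 < u -> ka * ln u - C <= ln (h u)) ->
 exists K de, 0 < de /\ forall al, 0 < al < de ->
   (forall u, 0 < u -> al * ln u - ln (h u) <= Tf p a al + K * al^2) /\
   (exists u, 0 < u /\ Tf p a al - K * al^2 <= al * ln u - ln (h u)).
Proof.
 intros Hp Ha Hd Hka H1 H2 H3 H4.
 set (B := a / p).
 assert (HB : 0 < B) by (apply Rdiv_lt_0_compat; auto).
 assert (HBp : B * p = a) by (unfold B; field; lra).
 set (u0 := Rmin 1 (Rmin (a/(2*(d+1))) (/B))).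
 assert (Hu0a : u0 <= 1) by apply Rmin_l.
 assert (Hu0b : u0 <= a/(2*(d+1))) by (eapply Rle_trans; [apply Rmin_r|apply Rmin_l]).
 assert (Hu0c : u0 <= /B) by (eapply Rle_trans; [apply Rmin_r|apply Rmin_r]).
 assert (Hu0 : 0 < u0).
 { unfold u0. repeat apply Rmin_pos; try lra. apply Rdiv_lt_0_compat; lra. apply Rinv_0_lt_compat; lra. }
 assert (Hdu0 : d * u0 <= a/2).
 { assert (2*(d+1)*u0 <= a).
   { apply (Rmult_le_compat_l (2*(d+1))) in Hu0b; [|lra].
     replace (2 * (d + 1) * (a / (2 * (d + 1)))) with a in Hu0b by (field; lra). lra. }
   nra. }
 assert (HBu0 : B * u0 <= 1).
 { apply (Rmult_le_compat_l B) in Hu0c; [|lra]. rewrite Rinv_r in Hu0c; lra. }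
 assert (hB : forall u, 0 < u <= u0 -> ln p + B/4*u <= ln (h u)).
 { intros u Hu. assert (h u >= p * (1 + B/2*u)).
   { destruct (H1 u ltac:(lra)) as [H1a _].
     assert (d*u <= d*u0) by (apply Rmult_le_compat_l; lra).
     assert (d*(u*u) <= a/2*u) by nra.
     assert (p * (1 + B/2*u) = p + a/2*u) by (rewrite <- HBp; field). lra. }
   assert (0 < 1 + B/2*u) by nra.
   assert (ln (p * (1 + B/2*u)) <= ln (h u)) by (apply ln_le'; nra).
   rewrite ln_mult in H5 by lra.
   pose proof (ln1p_ge_half (B/2*u) ltac:(nra)). lra. }
 set (m := B/4 * u0).
 assert (Hm : 0 < m) by (unfold m; nra).
 assert (hm : forall u, u0 <= u -> ln p + m <= ln (h u)).
 { intros u Hu. pose proof (hB u0 ltac:(lra)).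
   assert (ln (h u0) <= ln (h u)).
   { apply ln_le'. pose proof (H2 u0 Hu0); lra. apply H3; lra. }
   unfold m; lra. }
 set (lam := 32 / B).
 assert (Hlam : 0 < lam) by (unfold lam; apply Rdiv_lt_0_compat; lra).
 assert (HlamB : lam * B = 32) by (unfold lam; field; lra).
 set (L1 := Rmax 0 (2*(C + ln p + m)/ka)).
 assert (HL1a : 0 <= L1) by apply Rmax_l.
 assert (HL1b : 2*(C + ln p + m) <= ka * L1).
 { pose proof (Rmax_r 0 (2*(C + ln p + m)/ka)). fold L1 in H.
   apply (Rmult_le_compat_l ka) in H; [|lra].
   replace (ka * (2 * (C + ln p + m) / ka)) with (2*(C + ln p + m)) in H by (field; lra). lra. }
 set (de := Rmin (ka/2) (Rmin (m/(4*(L1+1))) (Rmin (B*(m/(8*B))^2)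
              (Rmin (u0/lam) (Rmin (a/(2*(d*lam+1))) (Rmin (1/64) B)))))).
 set (K := 4*(d*lam/p + 32*B)/B + d/(p*B^2)).
 exists K, de. split.
 { unfold de. repeat apply Rmin_pos; try lra.
   - apply Rdiv_lt_0_compat; lra.
   - apply Rmult_lt_0_compat; [lra|]. apply pow_lt. apply Rdiv_lt_0_compat; lra.
   - apply Rdiv_lt_0_compat; lra.
   - apply Rdiv_lt_0_compat; nra. }
 intros al [Hal Hde].
 assert (Hde' : al <= de) by lra. clear Hde.
 assert (D1 : al <= ka/2) by (eapply Rle_trans; [exact Hde'|]; apply Rmin_l).
 assert (D2 : al <= m/(4*(L1+1))) by (eapply Rle_trans; [exact Hde'|]; unfold de;
   eapply Rle_trans; [apply Rmin_r|apply Rmin_l]).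
 assert (D3 : al <= B*(m/(8*B))^2) by (eapply Rle_trans; [exact Hde'|]; unfold de;
   do 2 (eapply Rle_trans; [apply Rmin_r|]); apply Rmin_l).
 assert (D4 : al <= u0/lam) by (eapply Rle_trans; [exact Hde'|]; unfold de;
   do 3 (eapply Rle_trans; [apply Rmin_r|]); apply Rmin_l).
 assert (D5 : al <= a/(2*(d*lam+1))) by (eapply Rle_trans; [exact Hde'|]; unfold de;
   do 4 (eapply Rle_trans; [apply Rmin_r|]); apply Rmin_l).
 assert (D6 : al <= 1/64) by (eapply Rle_trans; [exact Hde'|]; unfold de;
   do 5 (eapply Rle_trans; [apply Rmin_r|]); apply Rmin_l).
 assert (D7 : al <= B) by (eapply Rle_trans; [exact Hde'|]; unfold de;
   do 5 (eapply Rle_trans; [apply Rmin_r|]); apply Rmin_r).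
 assert (E2 : al*(4*(L1+1)) <= m).
 { apply (Rmult_le_compat_r (4*(L1+1))) in D2; [|lra].
   replace (m / (4 * (L1 + 1)) * (4 * (L1 + 1))) with m in D2 by (field; lra). lra. }
 assert (E4 : lam*al <= u0).
 { apply (Rmult_le_compat_l lam) in D4; [|lra].
   replace (lam * (u0 / lam)) with u0 in D4 by (field; lra). lra. }
 assert (E5 : al*(2*(d*lam+1)) <= a).
 { apply (Rmult_le_compat_r (2*(d*lam+1))) in D5; [|nra].
   replace (a / (2 * (d * lam + 1)) * (2 * (d * lam + 1))) with a in D5 by (field; nra). lra. }
 assert (E3 : al/B <= (m/(8*B))^2).
 { apply (Rmult_le_compat_r (/B)) in D3; [|apply Rlt_le, Rinv_0_lt_compat; lra].
   replace (B * (m / (8 * B)) ^ 2 * / B) with ((m / (8 * B)) ^ 2) in D3 by (field; lra). exact D3. }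
 assert (HalpB : al * p / a = al / B) by (unfold B; field; lra).
 assert (HK1 : 0 <= 4*(d*lam/p + 32*B)/B).
 { apply Rmult_le_pos; [|apply Rlt_le, Rinv_0_lt_compat; lra].
   assert (0 <= d*lam/p) by (apply Rmult_le_pos; [nra|apply Rlt_le, Rinv_0_lt_compat; lra]). lra. }
 assert (HK2 : 0 <= d/(p*B^2)).
 { apply Rmult_le_pos; [lra|apply Rlt_le, Rinv_0_lt_compat; nra]. }
 split.
 - intros u Hu. unfold Tf. rewrite HalpB.
   assert (HKa : 0 <= K*al^2) by (apply Rmult_le_pos; [unfold K; lra|nra]).
   assert (Hx : 0 < al/B) by (apply Rdiv_lt_0_compat; lra).
   destruct (Rle_lt_dec u (lam*al)) as [CA|CB].
   +
     set (B1 := B - d*lam*al/p).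
     assert (HB1a : B/2 <= B1).
     { unfold B1. assert (d*lam*al/p <= B/2); [|lra].
       apply (Rmult_le_reg_r p); [lra|].
       replace (d*lam*al/p*p) with (d*lam*al) by (field; lra).
       replace (B/2*p) with (a/2) by (rewrite <- HBp; field). nra. }
     assert (HB1b : B1 <= B).
     { unfold B1. assert (0 <= d*lam*al/p); [|lra].
       apply Rmult_le_pos; [nra|apply Rlt_le, Rinv_0_lt_compat; lra]. }
     assert (Hu1 : 0 < u <= 1) by lra.
     destruct (H1 u Hu1) as [Hlo _].
     assert (d*(u*u) <= d*(lam*al)*u).
     { assert (u*u <= lam*al*u) by nra. nra. }
     assert (Hpb : p*B1 = a - d*lam*al) by (unfold B1; rewrite <- HBp; field; lra).
     assert (Hhu : p*(1 + B1*u) <= h u) by nra.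
     set (x := B1*u).
     assert (Hx0 : 0 <= x) by (unfold x; nra).
     assert (Hx32 : x <= 32*al).
     { unfold x. assert (B1*u <= B*u) by nra. assert (B*u <= B*(lam*al)) by nra.
       rewrite <- HlamB. nra. }
     assert (Hlh : ln p + ln (1 + x) <= ln (h u)).
     { rewrite <- ln_mult by lra. apply ln_le'; [nra|exact Hhu]. }
     pose proof (ln1p_ge x Hx0) as Hl1.
     set (B2 := B1*(1-32*al)).
     assert (HB2a : B/4 <= B2) by (unfold B2; nra).
     assert (HB2b : B2 <= B1) by (unfold B2; nra).
     assert (Hxx : x*x <= x*(32*al)) by nra.
     assert (Hlh2 : ln p + B2*u <= ln (h u)).
     { assert (B2*u = x - x*(32*al)) by (unfold B2, x; ring). lra. }
     pose proof (max_conc al B2 u Hal ltac:(lra) (proj1 Hu1)) as Hmc.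
     assert (HB2p : 0 < B2) by lra.
     assert (Hsplit : ln (al/B2) = ln (al/B) + ln (B/B2)).
     { rewrite <- ln_mult by (try apply Rdiv_lt_0_compat; lra). f_equal. field; lra. }
     assert (HlnB : ln (B/B2) <= (B - B2)*(4/B)).
     { pose proof (ln_le_sub1 (B/B2) ltac:(apply Rdiv_lt_0_compat; lra)).
       assert (B/B2 - 1 = (B-B2)/B2) by (field; lra).
       assert ((B-B2)/B2 <= (B-B2)*(4/B)).
       { unfold Rdiv. apply Rmult_le_compat_l; [lra|].
         replace (4 * /B) with (/(B/4)) by (field; lra).
         apply Rinv_le_contravar; lra. }
       lra. }
     assert (HBB2 : B - B2 <= d*lam*al/p + 32*al*B).
     { unfold B2. assert (B - B1 = d*lam*al/p) by (unfold B1; ring). nra. }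
     assert (al * ln (B/B2) <= 4*(d*lam/p + 32*B)/B * al^2).
     { assert (al * ln (B/B2) <= al * ((B - B2)*(4/B))) by (apply Rmult_le_compat_l; lra).
       assert (al*((B - B2)*(4/B)) <= al*((d*lam*al/p + 32*al*B)*(4/B))).
       { apply Rmult_le_compat_l; [lra|]. apply Rmult_le_compat_r; [|lra].
         apply Rlt_le, Rdiv_lt_0_compat; lra. }
       assert (al*((d*lam*al/p + 32*al*B)*(4/B)) = 4*(d*lam/p + 32*B)/B * al^2) by (field; lra).
       lra. }
     assert (4*(d*lam/p + 32*B)/B * al^2 <= K*al^2).
     { apply Rmult_le_compat_r; [nra|]. unfold K; lra. }
     rewrite Hsplit in Hmc. nra.
   + destruct (Rle_lt_dec u u0) as [CB2|CC].
     *
       pose proof (hB u ltac:(lra)) as HhB.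
       assert (Hla : 0 < lam*al) by nra.
       assert (Hsp : ln u = ln (lam*al) + ln (u/(lam*al))).
       { rewrite <- ln_mult by (try apply Rdiv_lt_0_compat; lra). f_equal. field; lra. }
       pose proof (ln_le_sub1 (u/(lam*al)) ltac:(apply Rdiv_lt_0_compat; lra)) as Hq.
       assert (al*ln (u/(lam*al)) <= al*(u/(lam*al) - 1)) by (apply Rmult_le_compat_l; lra).
       assert (al*(u/(lam*al) - 1) = (u - lam*al)*(B/32)) by (unfold lam; field; lra).
       assert ((u - lam*al)*(B/32) <= (u - lam*al)*(B/4)) by (apply Rmult_le_compat_l; lra).
       assert (Hs2 : ln (lam*al) = ln (al/B) + ln 32).
       { rewrite <- ln_mult by lra. f_equal. unfold lam; field; lra. }
       assert (H32 : ln 32 <= 5).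
       { replace 32 with (2^5) by ring. rewrite ln_pow by lra.
         pose proof (ln_le_sub1 2 ltac:(lra)). simpl INR. lra. }
       assert (lam*al*(B/4) = 8*al) by (unfold lam; field; lra).
       nra.
     *
       pose proof (hm u ltac:(lra)) as Hhm.
       pose proof (H4 u Hu) as Hh4.
       assert (HC1 : al*ln u - ln (h u) <= - ln p - m/2).
       { destruct (Rle_lt_dec (ln u) L1) as [L|L].
         - assert (al*ln u <= al*L1) by (apply Rmult_le_compat_l; lra).
           assert (4*al*L1 <= m) by nra. lra.
         - assert (al*ln u <= ka/2*ln u) by (apply Rmult_le_compat_r; lra).
           assert (ka/2*L1 <= ka/2*ln u) by (apply Rmult_le_compat_l; lra).
           lra. }
       assert (HC2 : -(m/4) <= al*ln (al/B)).
       { pose proof (xlnx_ge (al/B) Hx).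
         assert (sqrt (al/B) <= m/(8*B)).
         { rewrite <- (sqrt_pow2 (m/(8*B))) by (apply Rlt_le, Rdiv_lt_0_compat; lra).
           apply sqrt_le_1; [lra|nra|lra]. }
         assert (al*ln (al/B) = B*(al/B*ln (al/B))) by (field; lra).
         assert (B*(-2*sqrt(al/B)) >= -(m/4)).
         { assert (B*(m/(8*B)) = m/8) by (field; lra). nra. }
         nra. }
       assert (al <= m/4) by nra.
       lra.

 - exists (al/B). assert (Hus : 0 < al/B) by (apply Rdiv_lt_0_compat; lra).
   split; auto. unfold Tf. rewrite HalpB.
   assert (Hus1 : al/B <= 1).
   { apply (Rmult_le_compat_r (/B)) in D7; [|apply Rlt_le, Rinv_0_lt_compat; lra].
     rewrite Rinv_r in D7 by lra. exact D7. }
   destruct (H1 (al/B) ltac:(lra)) as [_ Hup].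
   set (y := al + d/p*((al/B)*(al/B))).
   assert (Hy : 0 <= y).
   { unfold y. assert (0 <= d/p*((al/B)*(al/B))).
     { apply Rmult_le_pos; [apply Rmult_le_pos; [lra|apply Rlt_le, Rinv_0_lt_compat; lra]|nra]. } lra. }
   assert (E : p + a*(al/B) + d*((al/B)*(al/B)) = p * (1 + y)) by (unfold y; rewrite <- HBp; field; split; lra).
   pose proof (H2 (al/B) Hus) as Hpl.
   assert (ln (h (al/B)) <= ln (p * (1+y))) by (apply ln_le'; lra).
   rewrite ln_mult in H by lra.
   pose proof (ln1p_le y ltac:(lra)).
   assert (d/p*((al/B)*(al/B)) = d/(p*B^2) * al^2) by (field; split; lra).
   assert (d/(p*B^2) * al^2 <= K * al^2).
   { apply Rmult_le_compat_r; [nra|]. unfold K; lra. }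
   unfold y in *. lra.
Qed.

Lemma Psi_pos X : 0 < Psi X.
Proof. unfold Psi. pose proof (sqrt_pos X). lra. Qed.

Lemma Psi_ge_half X : 1/2 <= Psi X.
Proof. unfold Psi. pose proof (sqrt_pos X). lra. Qed.

Lemma Psi_mono X Y : X <= Y -> Psi X <= Psi Y.
Proof. intros. unfold Psi. pose proof (sqrt_le_1_alt X Y H). lra. Qed.

Lemma iter_Psi_mono k X Y : X <= Y -> iter_fun k Psi X <= iter_fun k Psi Y.
Proof. induction k; simpl; auto. intros; apply Psi_mono; auto. Qed.

Lemma iter_Psi_pos k X : 0 < X -> 0 < iter_fun k Psi X.
Proof. destruct k; simpl; auto. intros; apply Psi_pos. Qed.

Lemma phi_eq x : phi x = ln (Psi (exp x)).
Proof. unfold phi, Psi, cosh.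
 assert (E2 : exp (x/2) = exp (x/4) * exp (x/4)) by (rewrite <- exp_plus; f_equal; lra).
 assert (E1 : exp (x/4) * exp (-(x/4)) = 1) by (rewrite <- exp_plus; replace (x/4 + - (x/4)) with 0 by ring; apply exp_0).
 assert (Es : sqrt (exp x) = exp (x/2)).
 { replace x with (x/2 + x/2) at 1 by field. rewrite exp_plus. apply sqrt_square. left; apply exp_pos. }
 rewrite Es. pattern (x/4) at 1. rewrite <- (ln_exp (x/4)).
 pose proof (exp_pos (x/4)). pose proof (exp_pos (-(x/4))).
 rewrite <- ln_mult by lra. f_equal. rewrite E2.
 set (e := exp (x/4)) in *. set (e' := exp (-(x/4))) in *.
 assert (e * ((e + e') / 2) = (e*e + e*e')/2) by field.
 rewrite H1, E1. reflexivity. Qed.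

Lemma iter_phi_eq k x : iter_fun k phi x = ln (iter_fun k Psi (exp x)).
Proof. induction k; simpl. rewrite ln_exp; auto.
 rewrite IHk, phi_eq, exp_ln; auto. apply iter_Psi_pos, exp_pos. Qed.

Lemma sqrt_step P F a d u : 1/2 <= P -> 0 < u <= 1 -> 0 < a -> 0 <= d ->
  P + a*u - d*(u*u) <= F <= P + a*u + d*(u*u) -> P <= F ->
  Psi P + a/(4*sqrt P)*u - (d + (a+d)^2/(4*(sqrt P)^2))/(4*sqrt P)*(u*u) <= Psi F
  <= Psi P + a/(4*sqrt P)*u + (d + (a+d)^2/(4*(sqrt P)^2))/(4*sqrt P)*(u*u).
Proof. intros HP Hu Ha Hd [HF1 HF2] HPF. unfold Psi.
 pose proof (sqrt_lt_R0 P ltac:(lra)) as Hs.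
 assert (Hss : sqrt P * sqrt P = P) by (apply sqrt_sqrt; lra).
 assert (Htt : sqrt F * sqrt F = F) by (apply sqrt_sqrt; lra).
 assert (Hts : sqrt P <= sqrt F) by (apply sqrt_le_1_alt; lra).
 set (s := sqrt P) in *. set (t := sqrt F) in *.
 set (w := t - s).
 assert (Hw : 0 <= w) by (unfold w; lra).
 assert (Hdel : F - P = w*w + 2*s*w) by (unfold w; nra).
 assert (Hdl : F - P <= (a+d)*u) by nra.
 assert (Hw2 : 2*s*w <= (a+d)*u) by nra.
 assert (Hw3 : w*w <= (a+d)^2/(4*s^2) * (u*u)).
 { assert (w = 2*s*w/(2*s)) by (field; lra).
   assert (w <= (a+d)*u/(2*s)).
   { rewrite H. unfold Rdiv. apply Rmult_le_compat_r; [apply Rlt_le, Rinv_0_lt_compat; lra|lra]. }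
   assert (w*w <= ((a+d)*u/(2*s))*((a+d)*u/(2*s))) by (apply Rmult_le_compat; lra).
   assert (((a+d)*u/(2*s))*((a+d)*u/(2*s)) = (a+d)^2/(4*s^2)*(u*u)) by (field; lra).
   lra. }
 set (E := (t+1)/2 - ((s+1)/2 + a/(4*s)*u)).
 assert (HE : E = ((F - P) - w*w - a*u)/(4*s)).
 { unfold E. rewrite Hdel. unfold w. field. lra. }
 set (d' := (d + (a+d)^2/(4*s^2))/(4*s)).
 assert (Hd'0 : 0 <= (a+d)^2/(4*s^2)).
 { apply Rmult_le_pos; [nra|apply Rlt_le, Rinv_0_lt_compat; nra]. }
 assert (E1 : E <= d'*(u*u)).
 { rewrite HE. unfold d'. unfold Rdiv. rewrite (Rmult_comm (d + _)), Rmult_assoc, (Rmult_comm (/ (4*s))).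
   apply Rmult_le_compat_r; [apply Rlt_le, Rinv_0_lt_compat; lra|]. nra. }
 assert (E2 : - (d'*(u*u)) <= E).
 { rewrite HE. unfold d'. 
   assert (- ((d + (a + d) ^ 2 / (4 * s ^ 2)) / (4 * s) * (u * u)) = (-(d*(u*u)) - (a + d) ^ 2 / (4 * s ^ 2)*(u*u)) / (4*s)) by (field; lra).
   rewrite H. unfold Rdiv at 1 3. apply Rmult_le_compat_r; [apply Rlt_le, Rinv_0_lt_compat; lra|]. nra. }
 unfold E in *. fold d'. lra.
Qed.

Fixpoint afun (n : nat) : R :=
  match n with
  | O => / 2
  | S n' => afun n' / (4 * sqrt (iter_fun (S n') Psi 0))
  end.

Lemma p_ge_half n : 1/2 <= iter_fun (S n) Psi 0.
Proof. simpl. apply Psi_ge_half. Qed.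

Lemma f_exp n : 0 < afun n /\ exists d, 0 <= d /\ forall u, 0 < u <= 1 ->
  iter_fun (S n) Psi 0 + afun n * u - d*(u*u) <= iter_fun (S n) Psi (u*u)
  <= iter_fun (S n) Psi 0 + afun n * u + d*(u*u).
Proof.
 induction n.
 - split. simpl; lra. exists 0. split; [lra|]. intros u Hu. simpl. unfold Psi.
   rewrite sqrt_square by lra. rewrite sqrt_0. lra.
 - destruct IHn as [Ha [d [Hd IH]]].
   pose proof (p_ge_half n) as HP.
   pose proof (sqrt_lt_R0 (iter_fun (S n) Psi 0) ltac:(lra)) as Hs.
   split.
   + change (afun (S n)) with (afun n / (4 * sqrt (iter_fun (S n) Psi 0))). apply Rdiv_lt_0_compat; lra.
   + eexists. split; [|intros u Hu; change (iter_fun (S (S n)) Psi (u*u)) with (Psi (iter_fun (S n) Psi (u*u)));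
        change (iter_fun (S (S n)) Psi 0) with (Psi (iter_fun (S n) Psi 0)); change (afun (S n)) with (afun n / (4 * sqrt (iter_fun (S n) Psi 0)));
        apply (sqrt_step _ _ _ d); auto; apply iter_Psi_mono; nra].
     apply Rmult_le_pos; [|apply Rlt_le, Rinv_0_lt_compat; lra].
     assert (0 <= (afun n + d)^2/(4*(sqrt (iter_fun (S n) Psi 0))^2)).
     { apply Rmult_le_pos; [nra|apply Rlt_le, Rinv_0_lt_compat; nra]. }
     lra.
Qed.

Lemma f_growth n : exists ka C, 0 < ka /\ forall u, 0 < u ->
  ka * ln u - C <= ln (iter_fun (S n) Psi (u*u)).
Proof.
 induction n.
 - exists 1, (ln 2). split; [lra|]. intros u Hu. simpl. unfold Psi.
   rewrite sqrt_square by lra.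
   assert (ln (u/2) <= ln ((u+1)/2)) by (apply ln_le'; lra).
   unfold Rdiv in H. rewrite ln_mult, ln_Rinv in H by lra. unfold Rdiv. lra.
 - destruct IHn as [ka [C [Hka IH]]]. exists (ka/2), (C/2 + ln 2). split; [lra|].
   intros u Hu. change (iter_fun (S (S n)) Psi (u*u)) with (Psi (iter_fun (S n) Psi (u*u))).
   set (Y := iter_fun (S n) Psi (u*u)) in *.
   assert (HY : 0 < Y) by (apply iter_Psi_pos; nra).
   pose proof (IH u Hu). fold Y in H.
   assert (Hs : 0 < sqrt Y) by (apply sqrt_lt_R0; auto).
   assert (ln Y = 2 * ln (sqrt Y)).
   { rewrite <- (sqrt_sqrt Y) at 1 by lra. rewrite ln_mult by lra. ring. }
   assert (ln (sqrt Y / 2) <= ln (Psi Y)) by (apply ln_le'; unfold Psi; lra).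
   unfold Rdiv in H1. rewrite ln_mult, ln_Rinv in H1 by lra. lra.
Qed.

Lemma prod_pos n : 0 < prod_Psi n.
Proof. induction n; simpl. lra. apply Rmult_lt_0_compat; auto. apply Psi_pos. Qed.

Lemma a_rel n : 2 * iter_fun (S n) Psi 0 =
  afun n * 4 ^ (S n) * sqrt (iter_fun (S n) Psi 0 * prod_Psi (S n)).
Proof.
 induction n.
 - simpl. unfold Psi. rewrite sqrt_0.
   replace ((0 + 1) / 2 * (1 * ((0 + 1) / 2))) with ((/2)*(/2)) by field.
   rewrite sqrt_square by lra. field.
 - change (iter_fun (S (S n)) Psi 0) with (Psi (iter_fun (S n) Psi 0)).
   change (prod_Psi (S (S n))) with (prod_Psi (S n) * Psi (iter_fun (S n) Psi 0)).
   change (afun (S n)) with (afun n / (4 * sqrt (iter_fun (S n) Psi 0))).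
   pose proof (p_ge_half n) as HP. pose proof (prod_pos (S n)) as Hpr.
   set (P := iter_fun (S n) Psi 0) in *. set (pr := prod_Psi (S n)) in *.
   pose proof (Psi_pos P) as HP'.
   set (P' := Psi P) in *.
   assert (Hs : 0 < sqrt P) by (apply sqrt_lt_R0; lra).
   assert (Hss : sqrt P * sqrt P = P) by (apply sqrt_sqrt; lra).
   rewrite sqrt_mult in IHn by lra.
   assert (E : sqrt (P' * (pr * P')) = P' * sqrt pr).
   { replace (P' * (pr * P')) with ((P'*P')*pr) by ring.
     rewrite sqrt_mult by nra. rewrite sqrt_square by lra. ring. }
   rewrite E.
   set (X := afun n * 4 ^ S n * sqrt pr).
   assert (HX : X = 2 * sqrt P).
   { apply Rmult_eq_reg_r with (sqrt P); [|lra].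
     unfold X. transitivity (afun n * 4 ^ S n * (sqrt P * sqrt pr)); [ring|].
     rewrite <- IHn. nra. }
   replace (4 ^ S (S n)) with (4 * 4 ^ S n) by reflexivity.
   assert (afun n / (4 * sqrt P) * (4 * 4 ^ S n) * (P' * sqrt pr) = X * P' / sqrt P)
     by (unfold X; field; lra).
   rewrite H, HX. field. lra.
Qed.

Fixpoint gfun (n : nat) (v : R) : R :=
  match n with
  | O => (1 + v) / 2
  | S n' => (sqrt (gfun n' (v*v)) + v) / 2
  end.

Fixpoint qfun (n : nat) : R :=
  match n with
  | O => / 2
  | S n' => sqrt (qfun n') / 2
  end.

Lemma g_eq n v : 0 < v -> gfun n v = v * iter_fun (S n) Psi ((/v)^(2^(S n))).
Proof.
 revert v. induction n; intros v Hv.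
 - simpl gfun. change (iter_fun 1 Psi ((/v)^(2^1))) with (Psi ((/v)^2)).
   unfold Psi. rewrite sqrt_pow2 by (apply Rlt_le, Rinv_0_lt_compat; lra). field. lra.
 - change (gfun (S n) v) with ((sqrt (gfun n (v*v)) + v) / 2).
   rewrite IHn by nra.
   change (iter_fun (S (S n)) Psi ((/v)^(2^(S (S n))))) with (Psi (iter_fun (S n) Psi ((/v)^(2^(S (S n)))))).
   replace ((/v)^(2^(S (S n)))) with ((/(v*v))^(2^(S n))).
   2:{ rewrite (Nat.pow_succ_r' 2 (S n)), pow_mult. f_equal. field. lra. }
   set (Y := iter_fun (S n) Psi ((/(v*v))^(2^(S n)))).
   assert (0 < Y) by (apply iter_Psi_pos; apply pow_lt; apply Rinv_0_lt_compat; nra).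
   rewrite sqrt_mult by nra. rewrite sqrt_square by lra. unfold Psi. field.
Qed.

Lemma g_mono n u v : 0 < u -> u <= v -> gfun n u <= gfun n v.
Proof.
 revert u v. induction n; intros u v Hu Huv; simpl.
 - lra.
 - assert (gfun n (u*u) <= gfun n (v*v)) by (apply IHn; nra).
   pose proof (sqrt_le_1_alt _ _ H). lra.
Qed.

Lemma g_exp n : 0 < qfun n /\ (forall v, 0 < v -> qfun n + v/2 <= gfun n v) /\
  exists d, 0 <= d /\ forall v, 0 < v <= 1 -> gfun n v <= qfun n + v/2 + d*(v*v).
Proof.
 induction n.
 - simpl. split; [lra|]. split; [intros; lra|]. exists 0. split; [lra|]. intros; lra.
 - destruct IHn as [Hq [Hlo [d [Hd Hup]]]].
   assert (Hs : 0 < sqrt (qfun n)) by (apply sqrt_lt_R0; auto).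
   split; [simpl; lra|]. split.
   + intros v Hv. simpl. pose proof (Hlo (v*v) ltac:(nra)).
     assert (sqrt (qfun n) <= sqrt (gfun n (v*v))) by (apply sqrt_le_1_alt; nra). lra.
   + exists ((1/2 + d)/(4*sqrt (qfun n))). split.
     { apply Rmult_le_pos; [lra|apply Rlt_le, Rinv_0_lt_compat; lra]. }
     intros v Hv. simpl.
     pose proof (Hlo (v*v) ltac:(nra)). pose proof (Hup (v*v) ltac:(nra)).
     set (G := gfun n (v*v)) in *. set (q := qfun n) in *.
     assert (HG : G - q <= (1/2 + d)*(v*v)).
     { assert (Hv2 : 0 <= v*v <= 1) by (split; nra). assert (v*v*(v*v) <= v*v) by (pose proof (Rmult_le_compat_l (v*v) _ _ (proj1 Hv2) (proj2 Hv2)); lra). assert (d*(v*v*(v*v)) <= d*(v*v)) by (apply Rmult_le_compat_l; lra). lra. }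
     assert (Htt : sqrt G * sqrt G = G) by (apply sqrt_sqrt; nra).
     assert (Hss : sqrt q * sqrt q = q) by (apply sqrt_sqrt; lra).
     assert (Hts : sqrt q <= sqrt G) by (apply sqrt_le_1_alt; nra).
     assert (Hk : 2 * sqrt q * (sqrt G - sqrt q) <= G - q) by nra.
     assert (sqrt G - sqrt q <= (1/2 + d)*(v*v) / (2 * sqrt q)).
     { apply (Rmult_le_reg_l (2 * sqrt q)); [lra|].
       replace (2 * sqrt q * ((1 / 2 + d) * (v * v) / (2 * sqrt q))) with ((1/2 + d)*(v*v)) by (field; lra).
       lra. }
     assert ((1/2 + d)*(v*v) / (2 * sqrt q) / 2 = (1 / 2 + d) / (4 * sqrt q) * (v * v)) by (field; lra).
     lra.
Qed.

Lemma q_pow n : qfun n = Rpower 2 (Rpower 2 (- INR n) - 2).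
Proof.
 induction n.
 - simpl. rewrite Ropp_0, Rpower_O by lra.
   replace (1 - 2) with (Ropp 1) by ring. rewrite Rpower_Ropp, Rpower_1 by lra. reflexivity.
 - simpl qfun. rewrite IHn.
   assert (H0 : 0 < Rpower 2 (Rpower 2 (- INR n) - 2)) by (unfold Rpower; apply exp_pos).
   rewrite <- Rpower_sqrt by auto. rewrite Rpower_mult.
   assert (E : forall y, Rpower 2 y / 2 = Rpower 2 (y + Ropp 1)).
   { intro y. rewrite Rpower_plus, (Rpower_Ropp 2 1), Rpower_1 by lra. field. }
   rewrite E. f_equal.
   rewrite S_INR. replace (- (INR n + 1)) with (- INR n + Ropp 1) by ring.
   rewrite Rpower_plus, (Rpower_Ropp 2 1), Rpower_1 by lra. field.
Qed.

Lemma abs_sand x T B : T - B <= x -> x <= T + B -> Rabs (x - T) <= B.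
Proof. intros. unfold Rabs. destruct (Rcase_abs (x - T)); lra. Qed.

Lemma sup_gen (S : R -> Prop) (h : R -> R) T K al :
  (forall z, S z -> exists u, 0 < u /\ z = al * ln u - ln (h u)) ->
  (forall u, 0 < u -> S (al * ln u - ln (h u))) ->
  (forall u, 0 < u -> al * ln u - ln (h u) <= T + K * al^2) ->
  (exists u, 0 < u /\ T - K * al^2 <= al * ln u - ln (h u)) ->
  Rabs (Rsup S - T) <= K * al^2.
Proof.
 intros HS1 HS2 Hup [u0 [Hu0 Hlo]].
 assert (HM : forall z, S z -> z <= T + K*al^2).
 { intros z Hz. destruct (HS1 z Hz) as [u [Hu ->]]. auto. }
 apply abs_sand.
 - eapply Rle_trans; [exact Hlo|]. apply (Rsup_ge S (T + K*al^2)); auto.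
 - apply Rsup_le; auto. exists (al * ln u0 - ln (h u0)); auto.
Qed.

Lemma end_gen (S : R -> Prop) (h : R -> R) p M : 0 < p -> 0 <= M ->
 (forall u, 0 < u <= 1 -> h u <= p + M*u) -> (forall u, 0 < u -> p <= h u) ->
 (forall z, S z -> exists u, 0 < u /\ z = - ln (h u)) ->
 (forall u, 0 < u -> S (- ln (h u))) -> Rsup S = - ln p.
Proof.
 intros Hp HM Hup Hlo HS1 HS2.
 assert (Hb : forall z, S z -> z <= - ln p).
 { intros z Hz. destruct (HS1 z Hz) as [u [Hu ->]].
   assert (ln p <= ln (h u)) by (apply ln_le'; auto). lra. }
 apply Rle_antisym.
 - apply Rsup_le; auto. exists (- ln (h 1)); apply HS2; lra.
 - apply Rnot_lt_le. intro Hc.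
   set (e := - ln p - Rsup S).
   assert (He : 0 < e) by (unfold e; lra).
   set (u := Rmin 1 (e*p/(2*(M+1)))).
   assert (Hu : 0 < u) by (apply Rmin_pos; [lra|apply Rdiv_lt_0_compat; nra]).
   assert (Hu1 : u <= 1) by apply Rmin_l.
   assert (Hu2 : u*(2*(M+1)) <= e*p).
   { pose proof (Rmin_r 1 (e*p/(2*(M+1)))). fold u in H.
     apply (Rmult_le_compat_r (2*(M+1))) in H; [|lra].
     replace (e * p / (2 * (M + 1)) * (2 * (M + 1))) with (e*p) in H by (field; lra). lra. }
   pose proof (Hup u ltac:(lra)).
   assert (ln (h u) <= ln (p * (1 + M*u/p))).
   { apply ln_le'. pose proof (Hlo u Hu); lra.
     replace (p * (1 + M*u/p)) with (p + M*u) by (field; lra). lra. }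
   assert (0 <= M*u/p) by (apply Rmult_le_pos; [nra|apply Rlt_le, Rinv_0_lt_compat; lra]).
   rewrite ln_mult in H0 by lra.
   pose proof (ln1p_le (M*u/p) ltac:(lra)).
   assert (M*u/p <= e/2).
   { apply (Rmult_le_reg_r p); [lra|]. replace (M*u/p*p) with (M*u) by (field; lra). nra. }
   pose proof (Rsup_ge S (- ln p) (- ln (h u)) Hb (HS2 u Hu)).
   unfold e in *. lra.
Qed.

Lemma exp_powN c N : exp c ^ N = exp (c * INR N).
Proof. induction N. simpl. rewrite Rmult_0_r, exp_0; auto.
 rewrite S_INR. simpl. rewrite IHN, <- exp_plus. f_equal; ring. Qed.

Lemma ident1 n eta xi : eta * xi - iter_fun (S n) phi xi =
  (2*eta) * ln (exp (xi/2)) - ln (iter_fun (S n) Psi (exp (xi/2) * exp (xi/2))).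
Proof. rewrite ln_exp, <- exp_plus, iter_phi_eq. replace (xi/2 + xi/2) with xi by field. field. Qed.

Lemma ident2 n eta xi : (/ 2 ^ (S n) - eta) * xi - iter_fun (S n) phi xi =
  (2 ^ (S n) * eta) * ln (exp (- xi / 2 ^ (S n))) - ln (gfun n (exp (- xi / 2 ^ (S n)))).
Proof.
 assert (H2 : 0 < 2 ^ (S n)) by (apply pow_lt; lra).
 rewrite g_eq by apply exp_pos. rewrite ln_mult by (try apply exp_pos; apply iter_Psi_pos, pow_lt, Rinv_0_lt_compat, exp_pos).
 rewrite ln_exp. rewrite iter_phi_eq.
 replace ((/ exp (- xi / 2 ^ S n)) ^ 2 ^ S n) with (exp xi).
 - field. lra.
 - rewrite <- exp_Ropp, exp_powN, pow_INR. f_equal. replace (INR 2) with 2 by (simpl; ring). field. lra.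
Qed.

Theorem theorem4p5 (r : nat) (hr : (1 <= r)%nat) :
  (* (1) expansion at 0+ *)
  (exists C delta : R, 0 < delta /\
     forall eta : R, 0 < eta < delta ->
       Rabs (I_rate r eta -
             (2 * eta * ln (4 ^ r * eta *
                 sqrt (iter_fun r Psi 0 * prod_Psi r))
              - ln (iter_fun r Psi 0) - 2 * eta)) <= C * eta ^ 2) /\
  (* (2) expansion at 2^{-r} - *)
  (exists C delta : R, 0 < delta /\
     forall eta : R, 0 < eta < delta ->
       Rabs (I_rate r (/ 2 ^ r - eta) -
             (2 ^ r * eta * ln (Rpower 2 (INR r - 1 + Rpower 2 (1 - INR r)) * eta)
              + (2 - Rpower 2 (1 - INR r)) * ln 2 - 2 ^ r * eta)) <= C * eta ^ 2) /\
  (* endpoint values *)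
  I_rate r 0 = - ln (iter_fun r Psi 0) /\
  I_rate r (/ 2 ^ r) = (2 - Rpower 2 (1 - INR r)) * ln 2.
Proof.
 destruct r as [|n]; [lia|]. clear hr.
 destruct (f_exp n) as [Ha [d [Hd Hf]]].
 destruct (f_growth n) as [ka [C [Hka Hg]]].
 pose proof (p_ge_half n) as Hp.
 set (p := iter_fun (S n) Psi 0) in *.
 set (hf := fun u => iter_fun (S n) Psi (u*u)).
 assert (Hf2 : forall u, 0 < u -> p <= hf u).
 { intros u Hu. unfold hf, p. apply iter_Psi_mono. nra. }
 assert (Hf3 : forall u v, 0 < u -> u <= v -> hf u <= hf v).
 { intros u v Hu Huv. unfold hf. apply iter_Psi_mono. nra. }
 destruct (main_gen hf p (afun n) d ka C ltac:(lra) Ha Hd Hka Hf Hf2 Hf3 Hg)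
   as [K1 [de1 [Hde1 Hmain1]]].
 destruct (g_exp n) as [Hq [Hglo [dg [Hdg Hgup]]]].
 assert (Hg1 : forall v, 0 < v <= 1 -> qfun n + /2*v - dg*(v*v) <= gfun n v <= qfun n + /2*v + dg*(v*v)).
 { intros v Hv. pose proof (Hglo v ltac:(lra)). pose proof (Hgup v Hv). split; nra. }
 assert (Hg2 : forall v, 0 < v -> qfun n <= gfun n v).
 { intros v Hv. pose proof (Hglo v Hv). lra. }
 assert (Hg4 : forall v, 0 < v -> 1 * ln v - ln 2 <= ln (gfun n v)).
 { intros v Hv. pose proof (Hglo v Hv).
   assert (ln (v/2) <= ln (gfun n v)) by (apply ln_le'; lra).
   unfold Rdiv in H0. rewrite ln_mult, ln_Rinv in H0 by lra. lra. }
 destruct (main_gen (gfun n) (qfun n) (/2) dg 1 (ln 2) Hq ltac:(lra) Hdg ltac:(lra) Hg1 Hg2 (g_mono n) Hg4)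
   as [K2 [de2 [Hde2 Hmain2]]].
 assert (H2r : 0 < 2 ^ S n) by (apply pow_lt; lra).
 split; [|split; [|split]].
 - exists (4*K1), (de1/2). split; [lra|]. intros eta [He1 He2].
   destruct (Hmain1 (2*eta) ltac:(lra)) as [Hup Hlo].
   unfold I_rate.
   assert (HS1 : forall z, (exists xi, z = eta * xi - iter_fun (S n) phi xi) ->
             exists u, 0 < u /\ z = 2*eta * ln u - ln (hf u)).
   { intros z [xi ->]. exists (exp (xi/2)). split; [apply exp_pos|]. apply ident1. }
   assert (HS2 : forall u, 0 < u -> exists xi, 2*eta * ln u - ln (hf u) = eta * xi - iter_fun (S n) phi xi).
   { intros u Hu. exists (2 * ln u). rewrite ident1.
     replace (2 * ln u / 2) with (ln u) by field. rewrite exp_ln by auto. reflexivity. }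
   pose proof (sup_gen _ hf _ K1 (2*eta) HS1 HS2 Hup Hlo) as Hres.
   replace (K1 * (2*eta)^2) with (4*K1*eta^2) in Hres by ring.
   replace (2 * eta * ln (4 ^ S n * eta * sqrt (p * prod_Psi (S n))) - ln p - 2 * eta)
     with (Tf p (afun n) (2*eta)); auto.
   unfold Tf. pose proof (a_rel n) as Hrel. fold p in Hrel.
   replace (2 * eta * p / afun n) with (4 ^ S n * eta * sqrt (p * prod_Psi (S n))). ring.
   apply (Rmult_eq_reg_r (afun n)); [|lra].
   replace (2 * eta * p / afun n * afun n) with (eta * (2*p)) by (field; lra).
   rewrite Hrel. ring.

 - exists (K2 * (2 ^ S n)^2), (de2 / 2 ^ S n). split; [apply Rdiv_lt_0_compat; lra|].
   intros eta [He1 He2].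
   assert (Hal : 0 < 2 ^ S n * eta < de2).
   { split; [nra|]. apply (Rmult_lt_compat_l (2 ^ S n)) in He2; [|lra].
     replace (2 ^ S n * (de2 / 2 ^ S n)) with de2 in He2 by (field; lra). lra. }
   destruct (Hmain2 (2 ^ S n * eta) Hal) as [Hup Hlo].
   unfold I_rate.
   assert (HS1 : forall z, (exists xi, z = (/ 2 ^ S n - eta) * xi - iter_fun (S n) phi xi) ->
             exists u, 0 < u /\ z = 2 ^ S n * eta * ln u - ln (gfun n u)).
   { intros z [xi ->]. exists (exp (- xi / 2 ^ S n)). split; [apply exp_pos|]. apply ident2. }
   assert (HS2 : forall u, 0 < u -> exists xi, 2 ^ S n * eta * ln u - ln (gfun n u) = (/ 2 ^ S n - eta) * xi - iter_fun (S n) phi xi).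
   { intros u Hu. exists (- (2 ^ S n * ln u)). rewrite ident2.
     replace (- - (2 ^ S n * ln u) / 2 ^ S n) with (ln u) by (field; lra). rewrite exp_ln by auto. reflexivity. }
   pose proof (sup_gen _ (gfun n) _ K2 (2 ^ S n * eta) HS1 HS2 Hup Hlo) as Hres.
   replace (K2 * (2 ^ S n * eta)^2) with (K2 * (2 ^ S n)^2 * eta^2) in Hres by ring.
   replace (2 ^ S n * eta * ln (Rpower 2 (INR (S n) - 1 + Rpower 2 (1 - INR (S n))) * eta) +
      (2 - Rpower 2 (1 - INR (S n))) * ln 2 - 2 ^ S n * eta)
     with (Tf (qfun n) (/2) (2 ^ S n * eta)); auto.
   unfold Tf. rewrite q_pow.
   assert (E1 : 1 - INR (S n) = - INR n) by (rewrite S_INR; ring).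
   rewrite E1, ln_Rpower.
   assert (E2 : Rpower 2 (INR (S n) - 1 + Rpower 2 (- INR n)) =
               2 ^ S n * Rpower 2 (Rpower 2 (- INR n) - 2) / / 2).
   { transitivity (Rpower 2 (INR (S n) + (Rpower 2 (- INR n) - 2) + 1)).
     - f_equal. ring.
     - rewrite !Rpower_plus, Rpower_1, Rpower_pow by lra. field. }
   rewrite E2. replace (2 ^ S n * Rpower 2 (Rpower 2 (- INR n) - 2) / / 2 * eta)
     with (2 ^ S n * eta * Rpower 2 (Rpower 2 (- INR n) - 2) / / 2) by (field; lra).
   ring.

 - unfold I_rate. apply (end_gen _ hf p (afun n + d)); try lra.
   + intros u Hu. destruct (Hf u Hu) as [_ H]. unfold hf.
     assert (u*u <= u) by nra. assert (d*(u*u) <= d*u) by (apply Rmult_le_compat_l; lra). lra.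
   + exact Hf2.
   + intros z Hz. cbv beta in Hz. destruct Hz as [xi ->]. exists (exp (xi/2)). split; [apply exp_pos|].
     rewrite (ident1 n 0 xi). fold (hf (exp (xi/2))). ring.
   + intros u Hu. exists (2 * ln u). rewrite (ident1 n 0).
     replace (2 * ln u / 2) with (ln u) by field. rewrite exp_ln by auto. fold (hf u). ring.

 - unfold I_rate.
   replace ((2 - Rpower 2 (1 - INR (S n))) * ln 2) with (- ln (qfun n)).
   2:{ rewrite q_pow, ln_Rpower. rewrite S_INR. replace (1 - (INR n + 1)) with (- INR n) by ring. ring. }
   apply (end_gen _ (gfun n) (qfun n) (/2 + dg)); try lra.
   + intros u Hu. destruct (Hg1 u Hu) as [_ H].
     assert (u*u <= u) by nra. assert (dg*(u*u) <= dg*u) by (apply Rmult_le_compat_l; lra). lra.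
   + exact Hg2.
   + intros z Hz. cbv beta in Hz. destruct Hz as [xi ->]. exists (exp (- xi / 2 ^ S n)). split; [apply exp_pos|].
     replace (/ 2 ^ S n * xi) with ((/ 2 ^ S n - 0) * xi) by ring.
     rewrite (ident2 n 0 xi). ring.
   + intros u Hu. exists (- (2 ^ S n * ln u)).
     replace (/ 2 ^ S n * - (2 ^ S n * ln u)) with ((/ 2 ^ S n - 0) * - (2 ^ S n * ln u)) by ring.
     rewrite (ident2 n 0).
     replace (- - (2 ^ S n * ln u) / 2 ^ S n) with (ln u) by (field; lra). rewrite exp_ln by auto. ring.
Qed.
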